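(* Let $d\ge0$ and $n>d$ be integers, and let $T_1\subset\{1,\dots,n\}$ be such that $\{T_1\}\in L(n,d)$. Then the poset ideal $\mathcal{I}_{n,d}(\{T_1\})$ is isomorphic as a poset to $L(n-|T_1|,\,d-|T_1|)$.
   Context: For a finite set $X$ let $\operatorname{codim}_d(X)=d+1-|X|$. For a finite collection $\{T_1,\dots,T_l\}$ of pairwise distinct finite sets put $\rho_d(\{T_1,\dots,T_l\})=\sum_{i=1}^l\operatorname{codim}_d(T_i)$ (with $\rho_d(\emptyset)=0$) and $D_d(\{T_1,\dots,T_l\})=\operatorname{codim}_d(T_1\cap\cdots\cap T_l)-\rho_d(\{T_1,\dots,T_l\})$. For integers $d\ge0$, $n>d$, $L(n,d)$ is the set of all collections $T$ of subsets of $\{1,\dots,n\}$ such that (i) $D_d(T')>0$ for every $T'\subset T$ with $|T'|>1$, and (ii) $0\le|T_i|\le d$ for every $T_i\in T$ (so $L(n,0)=\{\emptyset,\{\emptyset\}\}$). It is partially ordered by: $T<T'$ iff $\rho_d(T)<\rho_d(T')$ and for every $T_i\in T$ there exists $T'_j\in T'$ with $T'_j\subset T_i$; $T\le T'$ means $T<T'$ or $T=T'$. For $T\in L(n,d)$, $\mathcal{I}_{n,d}(T)=\{S\in L(n,d): S\le T\}$ with the induced order. *)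

(* Defs.v *)
From mathcomp Require Import all_boot all_order all_algebra.
Set Implicit Arguments. Unset Strict Implicit. Unset Printing Implicit Defensive.
Import Order.TTheory GRing.Theory Num.Theory.
Local Open Scope ring_scope.

(* The ground set {1,...,n} is modelled by 'I_n; collections of subsets
   are elements of {set {set 'I_n}}. *)

Definition codim (n d : nat) (X : {set 'I_n}) : int := (d.+1)%:Z - (#|X|)%:Z.

Definition rho (n d : nat) (T : {set {set 'I_n}}) : int :=
  \sum_(X in T) codim d X.

Definition Dd (n d : nat) (T : {set {set 'I_n}}) : int :=
  codim d (\bigcap_(X in T) X) - rho d T.

Definition inL (n d : nat) (T : {set {set 'I_n}}) : Prop :=
  (forall T' : {set {set 'I_n}}, T' \subset T -> (1 < #|T'|)%N -> 0 < Dd d T')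
  /\ (forall X, X \in T -> (#|X| <= d)%N).

Definition Llt (n d : nat) (T T' : {set {set 'I_n}}) : Prop :=
  rho d T < rho d T' /\
  (forall X, X \in T -> exists2 Y, Y \in T' & Y \subset X).

Definition Lle (n d : nat) (T T' : {set {set 'I_n}}) : Prop :=
  Llt d T T' \/ T = T'.

Definition inIdeal (n d : nat) (T S : {set {set 'I_n}}) : Prop :=
  inL d S /\ Lle d S T.

Definition poset_iso (n m : nat)
  (P : {set {set 'I_n}} -> Prop) (leP : {set {set 'I_n}} -> {set {set 'I_n}} -> Prop)
  (Q : {set {set 'I_m}} -> Prop) (leQ : {set {set 'I_m}} -> {set {set 'I_m}} -> Prop)
  (f : {set {set 'I_n}} -> {set {set 'I_m}}) : Prop :=
  [/\ forall S, P S -> Q (f S),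
      forall S S', P S -> P S' -> f S = f S' -> S = S',
      forall R, Q R -> exists2 S, P S & f S = R
    & forall S S', P S -> P S' -> (leP S S' <-> leQ (f S) (f S'))].

(* Main.v *)
Require Import Defs.
From mathcomp Require Import all_boot all_order all_algebra.
From mathcomp Require Import zify.
Import Order.TTheory GRing.Theory Num.Theory.
Set Implicit Arguments. Unset Strict Implicit. Unset Printing Implicit Defensive.

Lemma enum_compl (n : nat) (T1 : {set 'I_n}) :
  exists h : 'I_(n - #|T1|) -> 'I_n,
    [/\ injective h, (forall i, h i \notin T1) &
        (forall x, x \notin T1 -> exists i, h i = x)].
Proof.
have E : #|~: T1| = (n - #|T1|)%N by rewrite cardsCs setCK card_ord.
pose A := (~: T1).
have E' : (n - #|T1|)%N = #|A| by rewrite E.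
exists (fun i => enum_val (cast_ord E' i)); split.
- move=> i j /enum_val_inj /(congr1 val) /= H; exact: val_inj.
- by move=> i; have := enum_valP (cast_ord E' i); rewrite inE.
- move=> x xT. have xA : x \in A by rewrite inE.
  exists (cast_ord (esym E') (enum_rank_in xA x)).
  by rewrite cast_ordKV enum_rankK_in.
Qed.

Definition ext (n m : nat) (T1 : {set 'I_n}) (h : 'I_m -> 'I_n) (Y : {set 'I_m}) :
  {set 'I_n} := T1 :|: h @: Y.
Definition extS (n m : nat) (T1 : {set 'I_n}) (h : 'I_m -> 'I_n)
  (R : {set {set 'I_m}}) : {set {set 'I_n}} := (ext T1 h) @: R.
Definition resS (n m : nat) (h : 'I_m -> 'I_n) (S : {set {set 'I_n}}) :
  {set {set 'I_m}} := (fun X : {set 'I_n} => h @^-1: X) @: S.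

Section S.
Variables (n m : nat) (T1 : {set 'I_n}) (h : 'I_m -> 'I_n).
Hypothesis hinj : injective h.
Hypothesis hout : forall i, h i \notin T1.
Hypothesis hsurj : forall x, x \notin T1 -> exists i, h i = x.

Lemma pre_ext (Y : {set 'I_m}) : h @^-1: ext T1 h Y = Y.
Proof.
apply/setP=> i; rewrite !inE (negbTE (hout i)) /=.
apply/imsetP/idP => [[j jY /hinj ->] // | iY]; by exists i.
Qed.

Lemma ext_inj : injective (ext T1 h).
Proof. by move=> Y Y' E; rewrite -(pre_ext Y) -(pre_ext Y') E. Qed.

Lemma ext_pre (X : {set 'I_n}) : T1 \subset X -> ext T1 h (h @^-1: X) = X.
Proof.
move=> sub; apply/setP => x; rewrite !inE.
case: (boolP (x \in T1)) => xT /=; first by rewrite (subsetP sub).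
apply/imsetP/idP => [[i] | xX].
  by rewrite inE => hi ->.
have [i hi] := hsurj xT; exists i => //; by rewrite inE hi.
Qed.

Lemma T1_ext Y : T1 \subset ext T1 h Y.
Proof. exact: subsetUl. Qed.

Lemma card_ext Y : #|ext T1 h Y| = (#|T1| + #|Y|)%N.
Proof.
have I0 : T1 :&: h @: Y = set0.
  apply/setP=> x; rewrite !inE; apply/negP => /andP[xT /imsetP[i _ xe]].
  by move: xT; rewrite xe (negbTE (hout i)).
have := cardsUI T1 (h @: Y); rewrite I0 cards0 addn0 card_imset //.
Qed.

Lemma codim_ext (d : nat) Y : (#|T1| <= d)%N ->
  codim d (ext T1 h Y) = codim (d - #|T1|) Y.
Proof. move=> le; rewrite /codim card_ext; lia. Qed.

Lemma rho_ext (d : nat) R : (#|T1| <= d)%N ->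
  rho d (extS T1 h R) = rho (d - #|T1|) R.
Proof.
move=> le; rewrite /rho /extS big_imset /=; last by move=> ? ? _ _; apply: ext_inj.
by apply: eq_bigr => Y _; rewrite codim_ext.
Qed.

Lemma bigcap_ext R :
  \bigcap_(X in extS T1 h R) X = ext T1 h (\bigcap_(Y in R) Y).
Proof.
apply/setP => x.
case: (boolP (x \in T1)) => xT.
  rewrite [in RHS]inE xT /=; apply/bigcapP => X /imsetP[Y _ ->].
  by rewrite inE xT.
have [i <-] := hsurj xT.
have -> : (h i \in ext T1 h (\bigcap_(Y in R) Y)) = (i \in \bigcap_(Y in R) Y).
  by move/setP/(_ i): (pre_ext (\bigcap_(Y in R) Y)); rewrite inE.
apply/bigcapP/bigcapP => H Y YR.
  move/setP/(_ i): (pre_ext Y); rewrite inE => <-; apply: H; exact: imset_f.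
case/imsetP: YR => Z ZR ->; move/setP/(_ i): (pre_ext Z); rewrite inE => ->.
exact: H.
Qed.

Lemma Dd_ext (d : nat) R : (#|T1| <= d)%N ->
  Dd d (extS T1 h R) = Dd (d - #|T1|) R.
Proof. by move=> le; rewrite /Dd bigcap_ext codim_ext // rho_ext. Qed.

Lemma card_extS R : #|extS T1 h R| = #|R|.
Proof. by rewrite card_imset //; apply: ext_inj. Qed.

Lemma extS_inj : injective (extS T1 h).
Proof. by apply: imset_inj; apply: ext_inj. Qed.

Lemma res_extS R : resS h (extS T1 h R) = R.
Proof.
rewrite /resS /extS -imset_comp.
rewrite (eq_imset (g := id)); first by rewrite imset_id.
by move=> Y /=; rewrite pre_ext.
Qed.

Lemma extS_res (S : {set {set 'I_n}}) : (forall X, X \in S -> T1 \subset X) ->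
  extS T1 h (resS h S) = S.
Proof.
move=> H; rewrite /resS /extS -imset_comp.
rewrite (eq_in_imset (g := id)); first by rewrite imset_id.
by move=> X XS /=; rewrite ext_pre // H.
Qed.

Lemma sub_ext (Y Y' : {set 'I_m}) : (Y \subset Y') = (ext T1 h Y \subset ext T1 h Y').
Proof.
apply/idP/idP => H.
  by apply: setUS; apply: imsetS.
by rewrite -(pre_ext Y) -(pre_ext Y'); apply: preimsetS.
Qed.

Lemma sub_extS (R : {set {set 'I_m}}) (T' : {set {set 'I_n}}) : T' \subset extS T1 h R ->
  T' = extS T1 h (resS h T') /\ resS h T' \subset R.
Proof.
move=> sub; split.
  rewrite extS_res // => X /(subsetP sub) /imsetP[Y _ ->]; exact: T1_ext.
apply/subsetP => Y /imsetP[X /(subsetP sub) /imsetP[Z ZR ->] ->].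
by rewrite pre_ext.
Qed.

Lemma inL_ext (d : nat) R : (#|T1| <= d)%N ->
  inL d (extS T1 h R) <-> inL (d - #|T1|) R.
Proof.
move=> le; split.
  case=> H1 H2; split.
    move=> R' sub c; rewrite -Dd_ext //; apply: H1; last by rewrite card_extS.
    exact: imsetS.
  move=> Y YR; have := H2 _ (imset_f (ext T1 h) YR); rewrite card_ext; lia.
case=> H1 H2; split.
  move=> T' sub c; have [E s2] := sub_extS sub.
  rewrite E Dd_ext //; apply: H1 => //; by rewrite -card_extS -E.
move=> X /imsetP[Y YR ->]; rewrite card_ext; have := H2 _ YR; lia.
Qed.

Lemma Lle_ext (d : nat) R R' : (#|T1| <= d)%N ->
  Lle d (extS T1 h R) (extS T1 h R') <-> Lle (d - #|T1|) R R'.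
Proof.
move=> le; rewrite /Lle /Llt !rho_ext //; split.
  case=> [[r H] | E]; last by right; apply: extS_inj.
  left; split => // Y YR; have [X XR' sX] := H _ (imset_f (ext T1 h) YR).
  case/imsetP: XR' sX => Y' Y'R -> s; exists Y' => //; by rewrite sub_ext.
case=> [[r H] | ->]; last by right.
left; split => // X /imsetP[Y YR ->]; have [Y' Y'R s] := H _ YR.
exists (ext T1 h Y'); [exact: imset_f | by rewrite -sub_ext].
Qed.

End S.

Lemma rho_lt (m e : nat) (R : {set {set 'I_m}}) :
  inL e R -> R != [set set0] -> (rho e R < Posz e.+1)%R.
Proof.
case=> H1 H2 ne.
case: (ltnP 1 #|R|) => c.
  have := H1 R (subxx R) c; rewrite /Dd /codim; lia.
move: c; rewrite leq_eqVlt ltnS leqn0 => /orP[/cards1P[X EX] | /eqP/cards0_eq E].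
  rewrite EX /rho big_set1 /codim.
  have : X != set0 by apply/eqP => X0; move: ne; rewrite EX X0 eqxx.
  rewrite -card_gt0 => ?; lia.
by rewrite E /rho big_set0.
Qed.

Lemma ideal_sub (n d : nat) (T1 : {set 'I_n}) S :
  inIdeal d [set T1] S -> forall X, X \in S -> T1 \subset X.
Proof.
case=> _ [[_ H] | ->] X XS; last by move/set1P: XS => ->.
by have [Y /set1P -> //] := H X XS.
Qed.

Theorem lemma3p2 (n d : nat) (T1 : {set 'I_n}) :
  (d < n)%N -> inL d [set T1] ->
  exists f : {set {set 'I_n}} -> {set {set 'I_(n - #|T1|)}},
    poset_iso (inIdeal d [set T1]) (@Lle n d)
              (@inL (n - #|T1|) (d - #|T1|)) (@Lle (n - #|T1|) (d - #|T1|)) f.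
Proof.
move=> _ [_ HT]; have le := HT T1 (set11 T1).
have [h [hinj hout hsurj]] := enum_compl T1.
have E1 : [set T1] = extS T1 h [set set0].
  by rewrite /extS imset_set1 /ext imset0 setU0.
exists (resS h); split.
- move=> S HS; have ES := extS_res hsurj (ideal_sub HS).
  apply/(inL_ext hinj hout hsurj _ le); rewrite ES; exact: HS.1.
- move=> S S' HS HS' E.
  by rewrite -(extS_res hsurj (ideal_sub HS)) -(extS_res hsurj (ideal_sub HS')) E.
- move=> R HR; exists (extS T1 h R); last exact: res_extS.
  split; first exact/(inL_ext hinj hout hsurj _ le).
  rewrite E1; apply/(Lle_ext hinj hout _ _ le).
  have [-> | ne] := eqVneq R [set set0]; first by right.
  left; split.
    rewrite /rho big_set1 /codim cards0 subr0; exact: rho_lt.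
  by move=> X _; exists set0; [rewrite inE | exact: sub0set].
- move=> S S' HS HS'.
  have := Lle_ext hinj hout (resS h S) (resS h S') le.
  by rewrite (extS_res hsurj (ideal_sub HS)) (extS_res hsurj (ideal_sub HS')).
Qed.
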